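(* Let $a_m=\binom{2m-1}{m}$ for $m\ge1$ (so $a_1,a_2,\dots=1,3,10,35,126,\dots$), and let the integers $T_{nj},U_{nj}$ be as defined below. Then for all $n\ge1$: $$\sum_{j=0}^n a_{n+j}T_{nj}=1,\qquad \sum_{j=0}^{n+1}a_{n+j}U_{nj}=3.$$
   Context: The numbers $T_{nj},U_{nj}$ (integers $n\ge0$, $j$) are defined by: $T_{nj}=U_{nj}=0$ whenever $j<0$; $T_{0j}=0$ for all $j\ge1$, $U_{01}=-1$, $U_{0j}=0$ for all $j\ge2$; $T_{10}=4$, $U_{10}=4$; and for all $n\ge1$, $j\ge0$ with $(n,j)\ne(1,0)$: $T_{nj}=-3T_{n-1,j}+U_{n-1,j}$ and $U_{nj}=-4T_{n-1,j}+U_{n-1,j}+T_{n,j-1}$. *)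

(* Defs.v *)
From mathcomp Require Import all_boot all_order all_algebra.
Import Order.TTheory GRing.Theory Num.Theory.
Local Open Scope ring_scope.

(* Row 0 of the table, indexed by j : nat (entries with j < 0 are 0 and
   are handled separately below). *)
Definition T0 (j : nat) : int := 0.
Definition U0 (j : nat) : int := if j == 1%N then -1 else 0.

Fixpoint TU (n : nat) : nat -> int * int :=
  match n with
  | 0%N => fun j => (T0 j, U0 j)
  | n'.+1 =>
    let prev := TU n' in
    let Tn := fun k : nat =>
      if (n' == 0%N) && (k == 0%N) then 4
      else -3 * (prev k).1 + (prev k).2 in
    fun j =>
      if (n' == 0%N) && (j == 0%N) then (4, 4)
      else
        (Tn j,
         -4 * (prev j).1 + (prev j).2 + (if j is j'.+1 then Tn j' else 0))
  end.

Definition T (n j : nat) : int := (TU n j).1.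
Definition U (n j : nat) : int := (TU n j).2.

Definition a (m : nat) : nat := 'C(2 * m - 1, m).

(* Main.v *)
Require Import Defs.
From mathcomp Require Import all_boot all_order all_algebra.
From mathcomp Require Import zify ring lra.
Import Order.TTheory GRing.Theory Num.Theory.
Local Open Scope ring_scope.

Lemma TS n j : T n.+1 j = if (n == 0%N) && (j == 0%N) then 4
   else -3 * T n j + U n j.
Proof. by rewrite /T /U /=; case: (_ && _). Qed.

Lemma US n j : U n.+1 j = if (n == 0%N) && (j == 0%N) then 4
   else -4 * T n j + U n j + (if j is j'.+1 then T n.+1 j' else 0).
Proof.
rewrite /T /U /=; case: ifP => //= _; case: j => //= j.
by case: ifP.
Qed.

Lemma deg n : (forall j, (n < j)%N -> T n j = 0) /\ (forall j, (n.+1 < j)%N -> U n j = 0).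
Proof.
elim: n => [|n [IT IU]].
  split=> j hj; rewrite /T /U //= /U0.
  by case: eqP => // e; rewrite e in hj.
have HT : forall j, (n.+1 < j)%N -> T n.+1 j = 0.
  move=> j hj; rewrite TS; case: ifP => [/andP[_ /eqP e]|_]; first by rewrite e in hj.
  by rewrite IT ?IU //; lia.
split=> // j hj; rewrite US; case: ifP => [/andP[_ /eqP e]|_]; first by rewrite e in hj.
rewrite IT ?IU; try lia. case: j hj => // j hj. rewrite HT; [by rewrite mulr0 !addr0|lia].
Qed.

Lemma Urel n j : (0 < n)%N -> U n j = T n.+1 j + 3 * T n j.
Proof.
move=> hn; rewrite TS; case: ifP => [/andP[/eqP e _]|_]; first by rewrite e in hn.
ring.
Qed.

Lemma R4 n j : T n.+2 j = (if j is j'.+1 then T n.+1 j' else 0) - 2 * T n.+1 j - T n j.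
Proof.
case: n => [|n].
  rewrite TS /= US /= TS /= /T /U /=.
  case: j => [|j] /=; first by [].
  rewrite /T0; ring.
rewrite TS /= US /=.
rewrite (@Urel n.+1 j) //.
ring.
Qed.
Definition B (N : nat) (m : int) : int := if m < 0 then 0 else ('C(N, `|m|%N))%:Z.

Lemma Bpascal N q : B N.+1 q = B N q + B N (q - 1).
Proof.
rewrite /B; case: (ltrP q 0) => hq.
  by rewrite ifT // ?addr0; lia.
case: (ltrP (q - 1) 0) => hq1.
  have -> : q = 0 by lia.
  by rewrite !bin0 addr0.
have -> : `|q|%N = (`|q - 1|%N).+1 by lia.
by rewrite binS PoszD addrC.
Qed.

Lemma B2 N q : B N.+2 q = B N q + 2 * B N (q - 1) + B N (q - 2).
Proof.
rewrite !Bpascal.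
have -> : q - 1 - 1 = q - 2 by lia.
ring.
Qed.

Lemma Bsym N q : B N q = B N (N%:Z - q).
Proof.
rewrite /B; case: (ltrP q 0) => hq.
  rewrite ifF; last by lia.
  by rewrite bin_small //; lia.
case: (ltrP (N%:Z - q) 0) => hq1.
  by rewrite bin_small //; lia.
have -> : `|N%:Z - q|%N = (N - `|q|)%N by lia.
by rewrite bin_sub //; lia.
Qed.

Definition g N p := B N p - B N (p - 1).

Lemma grec N p : g N (p - 2) = g N.+2 p - 2 * g N (p - 1) - g N p.
Proof.
rewrite /g !B2.
have -> : p - 1 - 1 = p - 2 by lia.
have -> : p - 1 - 2 = p - 2 - 1 by lia.
ring.
Qed.

Definition f (n k : nat) : int := g (2 * k).-1 (k%:Z - n%:Z).

Lemma frec n k : (1 <= k)%N -> f n.+2 k = f n.+1 k.+1 - 2 * f n.+1 k - f n k.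
Proof.
move=> hk; rewrite /f.
have -> : (2 * k.+1).-1 = ((2 * k).-1).+2 by lia.
have -> : k.+1%:Z - n.+1%:Z = k%:Z - n%:Z by lia.
have -> : k%:Z - n.+1%:Z = k%:Z - n%:Z - 1 by lia.
have -> : k%:Z - n.+2%:Z = k%:Z - n%:Z - 2 by lia.
by rewrite grec.
Qed.

Lemma f0 k : (1 <= k)%N -> f 0 k = 0.
Proof.
move=> hk; rewrite /f /g Bsym.
have -> : (2 * k).-1%:Z - (k%:Z - 0%:Z) = k%:Z - 0%:Z - 1 by lia.
by rewrite subrr.
Qed.

Lemma aB m : (a m)%:Z = B (2 * m).-1 m.
Proof. by rewrite /a /B subn1. Qed.

Lemma f1 k : (1 <= k)%N -> f 1 k = 4 * (a k)%:Z - (a k.+1)%:Z.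
Proof.
move=> hk; rewrite !aB /f /g.
have -> : (2 * k.+1).-1 = ((2 * k).-1).+2 by lia.
rewrite B2.
set N := (2 * k).-1.
have e1 : B N k%:Z = B N (k%:Z - 1).
  rewrite Bsym; congr B; rewrite /N; lia.
have e2 : B N k.+1%:Z = B N (k%:Z - 2).
  rewrite Bsym; congr B; rewrite /N; lia.
have -> : k.+1%:Z - 1 = k%:Z by lia.
have -> : k.+1%:Z - 2 = k%:Z - 1 by lia.
have -> : k%:Z - 1%:Z - 1 = k%:Z - 2 by lia.
have -> : k%:Z - 1%:Z = k%:Z - 1 by lia.
rewrite e1 e2; ring.
Qed.

Definition S N n k := \sum_(0 <= j < N) (a (k + j))%:Z * T n j.

Lemma S0 N k : (1 <= k)%N -> S N 0 k = f 0 k.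
Proof.
move=> hk; rewrite f0 // /S big1 // => i _.
by rewrite /T /= /T0 mulr0.
Qed.

Lemma S1 N k : (1 < N)%N -> (1 <= k)%N -> S N 1 k = f 1 k.
Proof.
move=> hN hk; rewrite f1 // /S.
case: N hN => [|[|M]] // _.
rewrite !big_nat_recl // big1 => [|i _]; last first.
  by rewrite (proj1 (deg 1)) ?mulr0.
have -> : T 1 0 = 4 by [].
have -> : T 1 1 = -1 by [].
rewrite addn0 addn1; ring.
Qed.

Lemma Sshift N n k : (n.+2 < N)%N ->
  \sum_(0 <= j < N) (a (k + j))%:Z * (if j is j'.+1 then T n.+1 j' else 0)
  = S N n.+1 k.+1.
Proof.
move=> hN; rewrite /S.
case: N hN => [|M] // hM.
rewrite big_nat_recl // big_nat_recr //= (proj1 (deg n.+1) M); last by lia.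
rewrite !mulr0 add0r addr0.
by apply: eq_bigr => i _; rewrite addSnnS.
Qed.

Lemma Smain n : forall N k, (n < N)%N -> (1 <= k)%N -> S N n k = f n k /\ 
  ((n.+1 < N)%N -> S N n.+1 k = f n.+1 k).
Proof.
elim: n => [|n IH] N k hN hk.
  by split; [apply: S0 | move=> h; apply: S1].
split; first by apply: (proj2 (IH N k _ hk)); lia.
move=> hN2.
rewrite frec //.
have -> : S N n.+2 k = \sum_(0 <= j < N) (a (k + j))%:Z * (if j is j'.+1 then T n.+1 j' else 0)
   - 2 * S N n.+1 k - S N n k.
  rewrite /S mulr_sumr -!sumrB.
  by apply: eq_bigr => j _; rewrite R4; ring.
rewrite Sshift //.
rewrite (proj2 (IH N k _ hk)) ?(proj1 (IH N k _ hk)) ?(proj2 (IH N k.+1 _ _)) //; lia.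
Qed.

Theorem proposition7p1 (n : nat) (hn : (1 <= n)%N) :
  \sum_(0 <= j < n.+1) (a (n + j))%:Z * T n j = 1 /\
  \sum_(0 <= j < n.+2) (a (n + j))%:Z * U n j = 3.
Proof.
split.
  have := proj1 (@Smain n n.+1 n (ltnSn n) hn).
  rewrite /S => ->; rewrite /f /g.
  have Bn : forall N q, q < 0 -> B N q = 0 by move=> ? ? h; rewrite /B h.
  have -> : n%:Z - n%:Z = 0 by lia.
  rewrite (Bn _ (0 - 1)); last by lia.
  by rewrite /B ltxx bin0.
have -> : \sum_(0 <= j < n.+2) (a (n + j))%:Z * U n j = S n.+2 n.+1 n + 3 * S n.+2 n n.
  rewrite /S mulr_sumr -big_split /=.
  by apply: eq_bigr => j _; rewrite Urel //; ring.
have [H1 H2] := @Smain n n.+2 n (leqW (ltnSn n)) hn.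
rewrite H1 H2 //.
have Bn : forall N q, q < 0 -> B N q = 0 by move=> ? ? h; rewrite /B h.
rewrite /f /g.
have -> : n%:Z - n.+1%:Z = -1 by lia.
have -> : n%:Z - n%:Z = 0 by lia.
rewrite (Bn _ (-1)) ?(Bn _ (-1 - 1)) ?(Bn _ (0 - 1)); try lia.
by rewrite /B ltxx bin0.
Qed.
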